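(* For every integer $p\ge1$, $$B_{2p}=-\frac{(2p)!}{2^{2p}-2}\det U_p,\qquad E_{2p}=(2p)!\det V_p,$$ where $U_p$ and $V_p$ are $(p+1)\times(p+1)$ matrices (rows and columns indexed $0,\dots,p$) whose last column is $(1,0,\dots,0)^T$ and whose first $p$ columns are given, for $0\le j\le p-1$, by $(U_p)_{ij}=1/(2(i-j)+1)!$ and $(V_p)_{ij}=1/(2(i-j))!$ when $i\ge j$, and $(U_p)_{ij}=(V_p)_{ij}=0$ when $i<j$.
   Context: The Bernoulli numbers are defined by $\sum_{n\ge0}B_nz^n/n!=z/(e^z-1)$, and the Euler numbers by $\sum_{n\ge0}E_nz^n/n!=1/\cosh z$. *)

(* Defs.v *)
From mathcomp Require Import all_boot all_order all_algebra.
Set Implicit Arguments. Unset Strict Implicit. Unset Printing Implicit Defensive.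
Import Order.TTheory GRing.Theory Num.Theory.
Local Open Scope ring_scope.

Definition expm1_coef (m : nat) : rat := if m == 0%N then 0 else (m`!%:R)^-1.
Definition cosh_coef (m : nat) : rat := if odd m then 0 else (m`!%:R)^-1.

(* B is the Bernoulli sequence: sum_n B_n z^n/n! = z/(e^z-1), stated as the
   formal power series identity (e^z - 1) * sum_n B_n z^n/n! = z,
   coefficient by coefficient. *)
Definition is_bernoulli (B : nat -> rat) : Prop :=
  forall n : nat,
    \sum_(k < n.+1) (B k / (k`!)%:R) * expm1_coef (n - k) = (n == 1%N)%:R.

(* E is the Euler sequence: sum_n E_n z^n/n! = 1/cosh z, stated as the
   formal power series identity cosh z * sum_n E_n z^n/n! = 1. *)
Definition is_euler (E : nat -> rat) : Prop :=
  forall n : nat,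
    \sum_(k < n.+1) (E k / (k`!)%:R) * cosh_coef (n - k) = (n == 0%N)%:R.

Definition U_mx (p : nat) : 'M[rat]_(p.+1) :=
  \matrix_(i < p.+1, j < p.+1)
    if (j == p :> nat) then (i == 0 :> nat)%:R
    else if (j <= i)%N then (((2 * (i - j)).+1)`!%:R)^-1 else 0.

Definition V_mx (p : nat) : 'M[rat]_(p.+1) :=
  \matrix_(i < p.+1, j < p.+1)
    if (j == p :> nat) then (i == 0 :> nat)%:R
    else if (j <= i)%N then (((2 * (i - j)))`!%:R)^-1 else 0.

(* Main.v *)
Require Import Defs.
From mathcomp Require Import all_boot all_order all_algebra.
From mathcomp Require Import zify ring.
Import Order.TTheory GRing.Theory Num.Theory.
Local Open Scope ring_scope.

Definition zN (N : nat) (p : {poly rat}) := forall i, (i < N)%N -> p`_i = 0.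

Lemma zN_add N p q : zN N p -> zN N q -> zN N (p + q).
Proof. by move=> hp hq i hi; rewrite coefD hp ?hq ?addr0. Qed.
Lemma zN_opp N p : zN N p -> zN N (- p).
Proof. by move=> hp i hi; rewrite coefN hp ?oppr0. Qed.
Lemma zN_mull N q p : zN N p -> zN N (q * p).
Proof.
move=> hp i hi; rewrite coefM big1 // => [[j /= hj]] _.
by rewrite hp ?mulr0 //; lia.
Qed.
Lemma zN_eq N p q : p = q -> zN N q -> zN N p.
Proof. by move=> ->. Qed.

Definition pf (N : nat) (f : nat -> rat) : {poly rat} := \poly_(i < N) f i.

Lemma pf_mul N f g i : (i < N)%N ->
  (pf N f * pf N g)`_i = \sum_(k < i.+1) f k * g (i - k)%N.
Proof.
move=> hi; rewrite coefM; apply: eq_bigr => k _; have hk := ltn_ord k.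
rewrite !coef_poly.
have -> : (k < N)%N by lia.
by have -> : (i - k < N)%N by lia.
Qed.

Lemma pfE N f i : (i < N)%N -> (pf N f)`_i = f i.
Proof. by move=> hi; rewrite coef_poly hi. Qed.

Lemma fact_neq0 n : (n`!%:R : rat) != 0.
Proof. by rewrite pnatr_eq0 -lt0n fact_gt0. Qed.

Lemma binom_sum (x y : rat) n :
  \sum_(k < n.+1) (y ^+ k / k`!%:R) * (x ^+ (n - k) / (n - k)`!%:R) = (x + y) ^+ n / n`!%:R.
Proof.
rewrite exprDn mulr_suml; apply: eq_bigr => k _; have hk := ltn_ord k.
have hf : (n`!%:R : rat) = 'C(n, k)%:R * (k`!%:R * (n - k)`!%:R).
  by rewrite -!natrM bin_fact.
have hC : ('C(n, k)%:R : rat) != 0 by rewrite pnatr_eq0 -lt0n bin_gt0.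
have h1 := fact_neq0 k; have h2 := fact_neq0 (n - k).
rewrite -mulr_natr hf; field.
by rewrite hC h1 h2.
Qed.

Lemma sum_pair (f : nat -> rat) n :
  \sum_(j < (2 * n)%N) f j = \sum_(k < n) f (2 * k)%N + \sum_(k < n) f (2 * k).+1.
Proof.
elim: n => [|n IH]; first by rewrite !big_ord0 addr0.
have -> : (2 * n.+1 = (2 * n).+2)%N by lia.
rewrite !big_ord_recr /= IH -!addrA; congr (_ + _); rewrite addrC -!addrA; congr (_ + _).
by rewrite addrC.
Qed.

Lemma sum_rev (F : nat -> nat -> rat) n :
  \sum_(k < n.+1) F k (n - k)%N = \sum_(k < n.+1) F (n - k)%N k.
Proof.
rewrite (reindex_inj rev_ord_inj); apply: eq_bigr => k _; have hk := ltn_ord k.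
by have -> : (n - (n - k) = k)%N by lia.
Qed.
Lemma shift_sum (p i j : nat) (F : nat -> rat) :
  (j <= i)%N -> (i <= p)%N ->
  (forall k, (k < j)%N -> F k = 0) -> (forall k, (i < k)%N -> (k < p.+1)%N -> F k = 0) ->
  \sum_(k < p.+1) F k = \sum_(l < (i - j).+1) F (l + j)%N.
Proof.
move=> ji ip F1 F2.
rewrite -(big_mkord xpredT F) (@big_cat_nat _ _ _ j 0%N p.+1 _ _ (leq0n j)) /=; last by rewrite (leq_trans ji (leq_trans ip _)).
rewrite big_nat_cond big1 ?add0r; last by move=> k /andP[/andP[_ ?] _]; apply: F1.
rewrite -{1}(add0n j) big_addn.
rewrite (@big_cat_nat _ _ _ (i - j).+1 0%N (p.+1 - j) _ _ (leq0n _)) /=; last first.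
  by lia.
have -> : \sum_((i - j).+1 <= k < p.+1 - j) F (k + j)%N = 0.
  rewrite big_nat_cond big1 // => k /andP[/andP[H1 H2] _]; apply: F2; lia.
by rewrite addr0 big_mkord.
Qed.

Lemma det_toep (p : nat) (a c : nat -> rat) (a0 : a 0%N = 1)
  (h : forall n, (n <= p)%N -> \sum_(k < n.+1) a k * c (n - k)%N = (n == 0%N)%:R) :
  \det (\matrix_(i < p.+1, j < p.+1) if (j == p :> nat) then (i == 0 :> nat)%:R
        else if (j <= i)%N then a (i - j)%N else 0) = c p.
Proof.
set A := \matrix_(i, j) _.
pose C : 'M[rat]_(p.+1) := \matrix_(i, j) if (j <= i)%N then c (i - j)%N else 0.
have c0 : c 0%N = 1 by have := h 0%N (leq0n _); rewrite big_ord1 a0 mul1r.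
have hCA : C *m A = \matrix_(i, j) if (j == p :> nat) then c i else (i == j :> nat)%:R.
  apply/matrixP => i j; rewrite !mxE.
  case: eqP => [jp|jnp].
    rewrite (bigD1 ord0) //= big1 ?addr0; first by rewrite !mxE jp eqxx /= mulr1 subn0.
    move=> k kn0; rewrite !mxE jp eqxx /=.
    by move/negbTE: kn0; rewrite -(inj_eq val_inj) /= => ->; rewrite mulr0.
  have hi := ltn_ord i.
  pose F n := C i (inord n) * A (inord n) j.
  have FE : forall k : 'I_p.+1, C i k * A k j = F k by move=> k; rewrite /F inord_val.
  rewrite (eq_bigr (fun k : 'I_p.+1 => F k)); last by move=> k _; apply: FE.
  have [ji|ij] := leqP j i.
    rewrite (@shift_sum p i j F) //; last 2 first.
    - move=> k kj; rewrite /F !mxE inordK; last by lia.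
      move/eqP/negbTE: jnp => ->; have -> : (j <= k)%N = false by lia.
      by rewrite mulr0.
    - move=> k ik kp; rewrite /F !mxE inordK //.
      by rewrite leqNgt ik mul0r.
    have -> : (i == j :> nat) = (i - j == 0)%N by apply/eqP/eqP; lia.
    rewrite -(h (i - j)%N); last by lia.
    apply: eq_bigr => [[l /= hl]] _; rewrite /F !mxE !inordK; last by lia.
    move/eqP/negbTE: jnp => ->.
    have -> : (l + j <= i)%N by lia.
    have -> : (j <= l + j)%N by lia.
    rewrite mulrC addnK; congr (_ * c _); lia.
  rewrite big1; first by have -> : (i == j :> nat) = false by apply/eqP; lia.
  move=> k _; rewrite /F inord_val !mxE.
  case: (leqP k i) => ki; last by rewrite mul0r.
  have -> : (j <= k)%N = false by lia.
  by move/eqP/negbTE: jnp => ->; rewrite mulr0.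
have dC : \det C = 1.
  rewrite det_trig; last by apply/is_trig_mxP => i j ij; rewrite mxE leqNgt ij.
  by rewrite big1 // => i _; rewrite mxE leqnn subnn c0.
have := congr1 determinant hCA; rewrite det_mulmx dC mul1r => ->.
rewrite -det_tr det_trig; last first.
  apply/is_trig_mxP => i j ij; rewrite !mxE.
  have -> : (i == p :> nat) = false by apply/eqP; have := ltn_ord j; lia.
  by have -> : (j == i :> nat) = false by apply/eqP; lia.
rewrite big_ord_recr /= big1 ?mul1r; first by rewrite !mxE eqxx.
by move=> i _; rewrite !mxE /= eqxx (ltn_eqF (ltn_ord i)).
Qed.
Lemma bern_rel (p : nat) (B : nat -> rat) (hB : is_bernoulli B) (m : nat) :
  (m <= p)%N ->
  \sum_(k < m.+1) ((2 * k).+1`!%:R)^-1 *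
     ((2 - 2 ^+ (2 * (m - k))) * B (2 * (m - k))%N / (2 * (m - k))`!%:R)
  = (m == 0%N)%:R.
Proof.
move=> mp.
pose N := (2 * p).+2.
pose e := pf N (fun i => 1 ^+ i / i`!%:R).
pose em := pf N (fun i => (-1) ^+ i / i`!%:R).
pose e2 := pf N (fun i => (1 + 1) ^+ i / i`!%:R).
pose em1 := pf N expm1_coef.
pose e2m1 := pf N (fun i => 2 ^+ i * expm1_coef i).
pose b := pf N (fun i => B i / i`!%:R).
pose b2 := pf N (fun i => 2 ^+ i * (B i / i`!%:R)).
have two : (1 + 1 : rat) = 2 by [].
have D1 : zN N (e * em - 1).
  move=> i hi; rewrite coefB coef1 /em /e pf_mul // (binom_sum (-1) 1) addNr expr0n.
  by case: i hi => [|i] hi //=; rewrite ?subrr // mul0r subr0.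
have D2 : zN N (e * e - e2).
  move=> i hi; rewrite coefB /e2 pfE // /e pf_mul //.
  by rewrite (binom_sum 1 1) subrr.
have D3 : zN N (b * em1 - 'X).
  by move=> i hi; rewrite coefB coefX pf_mul // hB subrr.
have D3' : zN N (em1 - (e - 1)).
  move=> i hi; rewrite !coefB coef1 !pfE // /expm1_coef.
  by case: i hi => [|i] hi /=; rewrite expr1n ?mul1r ?subr0 ?subrr // invr1 subrr oppr0.
have D4 : zN N (b2 * e2m1 - 'X *+ 2).
  move=> i hi; rewrite coefB coefMn coefX pf_mul //.
  have -> : \sum_(k < i.+1) 2 ^+ k * (B k / k`!%:R) * (2 ^+ (i - k) * expm1_coef (i - k))
     = 2 ^+ i * \sum_(k < i.+1) (B k / k`!%:R) * expm1_coef (i - k).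
    rewrite mulr_sumr; apply: eq_bigr => k _.
    have hk : (k <= i)%N by have := ltn_ord k; lia.
    have -> : (2 : rat) ^+ i = 2 ^+ k * 2 ^+ (i - k) by rewrite -exprD subnKC.
    ring.
  rewrite hB; case: eqP => [->|_]; first by rewrite mulr1 expr1 subrr.
  by rewrite mulr0 mul0rn subrr.
have D4' : zN N (e2m1 - (e2 - 1)).
  move=> i hi; rewrite !coefB coef1 !pfE // /expm1_coef two.
  by case: i hi => [|i] hi /=; rewrite ?expr0 ?mul1r ?subr0 ?subrr ?mulr0 // invr1 subrr oppr0.
have Z : zN N ((e - em) * (b *+ 2 - b2) - 'X *+ 2).
  apply: (@zN_eq _ _ ((- (b *+ 2)) * (e * em - 1) + ((1 + em) *+ 2) * (b * em1 - 'X)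
     - (((1 + em) *+ 2) * b) * (em1 - (e - 1)) + (e * b2) * (e * em - 1)
     - (em * b2) * (e * e - e2) - em * (b2 * e2m1 - 'X *+ 2)
     + (em * b2) * (e2m1 - (e2 - 1)))).
    ring.
  repeat first [assumption | apply: zN_add | apply: zN_opp | apply: zN_mull].
have sg : forall k, (-1) ^+ (2 * k)%N = 1 :> rat.
  by move=> k; rewrite -signr_odd oddM.
have hi : ((2 * m).+1 < N)%N by rewrite /N; lia.
have := Z _ hi; rewrite coefB coefMn coefX coefM.
have -> : ((2 * m).+2 = 2 * m.+1)%N by lia.
rewrite (sum_pair (fun j => (e - em)`_j * (b *+ 2 - b2)`_((2 * m).+1 - j))).
rewrite big1 ?add0r; last first.
  move=> k _; have hk := ltn_ord k.
  rewrite coefB !pfE; try lia.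
  by rewrite sg !expr1n subrr mul0r.
move=> H.
have H2 : 2 * \sum_(k < m.+1) ((2 * k).+1`!%:R)^-1 *
     ((2 - 2 ^+ (2 * (m - k))) * B (2 * (m - k))%N / (2 * (m - k))`!%:R)
   = 2 * (m == 0%N)%:R.
  apply/eqP; rewrite -subr_eq0; apply/eqP; rewrite -[RHS]H; congr (_ - _); last first.
    rewrite eqSS; case: (m =P 0%N) => [->|/eqP]; first by rewrite mulr1.
    by rewrite muln_eq0 /= => /negbTE ->; rewrite mulr0.
  rewrite mulr_sumr; apply: eq_bigr => k _; have hk := ltn_ord k.
  rewrite coefB !pfE; try lia.
  rewrite coefB coefMn !pfE; try lia.
  have -> : ((2 * m).+1 - (2 * k).+1 = 2 * (m - k))%N by lia.
  rewrite expr1n exprS sg mulr1; field.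
  by rewrite fact_neq0 fact_neq0.
by move: H2; apply: mulfI.
Qed.
Lemma euler_rel (E : nat -> rat) (hE : is_euler E) (m : nat) :
  \sum_(k < m.+1) ((2 * k)`!%:R)^-1 * (E (2 * (m - k))%N / (2 * (m - k))`!%:R)
  = (m == 0%N)%:R.
Proof.
have := hE (2 * m)%N.
rewrite big_ord_recr /=.
rewrite (sum_pair (fun j => E j / j`!%:R * cosh_coef (2 * m - j))).
rewrite [X in _ + X + _ = _ -> _]big1 ?addr0; last first.
  move=> k _; have hk := ltn_ord k; rewrite /cosh_coef.
  have -> : (2 * m - (2 * k).+1 = (2 * (m - k - 1)).+1)%N by lia.
  by rewrite /= oddM /= mulr0.
rewrite subnn /cosh_coef /= mulr1 => H.
rewrite (sum_rev (fun k l => ((2 * k)`!%:R)^-1 * (E (2 * l)%N / (2 * l)`!%:R))).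
rewrite big_ord_recr /= subnn mul1r.
have -> : (m == 0%N) = (2 * m == 0)%N by lia.
rewrite -H; congr (_ + _); apply: eq_bigr => k _; have hk := ltn_ord k.
have -> : (2 * m - 2 * k = 2 * (m - k))%N by lia.
by rewrite oddM /= mulrC.
Qed.

Theorem mainTheorem7 (p : nat) (hp : (1 <= p)%N)
  (B E : nat -> rat) (hB : is_bernoulli B) (hE : is_euler E) :
  B (2 * p)%N = - (((2 * p)`!)%:R / (2 ^+ (2 * p) - 2)) * \det (U_mx p)
  /\ E (2 * p)%N = ((2 * p)`!)%:R * \det (V_mx p).
Proof.
split.
  have hU : \det (U_mx p) =
     (2 - 2 ^+ (2 * p)) * B (2 * p)%N / (2 * p)`!%:R.
    apply: (@det_toep p (fun k => ((2 * k).+1`!%:R)^-1)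
       (fun n => (2 - 2 ^+ (2 * n)) * B (2 * n)%N / (2 * n)`!%:R)).
      by rewrite muln0 /= invr1.
    by move=> n np; apply: (bern_rel p B hB n np).
  rewrite hU.
  have h4 : (4 <= 2 ^ (2 * p))%N.
    by rewrite -[4%N]/(2 ^ 2)%N leq_pexp2l //; lia.
  have hne : (2 ^+ (2 * p) - 2 : rat) != 0.
    rewrite -natrX -[2 : rat]/(2%:R) -natrB; last by lia.
    by rewrite pnatr_eq0; apply/eqP; lia.
  have hf := fact_neq0 (2 * p).
  field.
  by rewrite hne hf.
have hV : \det (V_mx p) = E (2 * p)%N / (2 * p)`!%:R.
  apply: (@det_toep p (fun k => ((2 * k)`!%:R)^-1)
     (fun n => E (2 * n)%N / (2 * n)`!%:R)).
    by rewrite muln0 /= invr1.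
  by move=> n np; apply: (euler_rel E hE n).
rewrite hV.
have hf := fact_neq0 (2 * p).
by field.
Qed.
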